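(* Let $a,b\in\mathbb{R}$ and $\theta\in\mathbb{R}$ with $\cos\theta\ne0$. If $w\in\mathbb{C}\setminus\mathbb{R}$ is a zero of $f^*(\cdot,\theta)$ with $|w|<1$, then, setting $\zeta=1/w$ and $\tau=-\frac{1}{\zeta}-2\cos\theta$, we have $\zeta\tau^3\notin\mathbb{R}$.
   Context: $f^*(\zeta,\theta)=(\zeta+2\cos\theta)(2\zeta\cos\theta+1)+b\zeta-a(\zeta+2\cos\theta)^3$, viewed as a polynomial in complex $\zeta$. *)

(* Defs.v *)
From Stdlib Require Import Reals.
Open Scope R_scope.

Definition Cx := (R * R)%type.
Definition Re (z : Cx) : R := fst z.
Definition Im (z : Cx) : R := snd z.
Definition RtoC (x : R) : Cx := (x, 0).
Definition Cadd (z w : Cx) : Cx := (Re z + Re w, Im z + Im w).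
Definition Copp (z : Cx) : Cx := (- Re z, - Im z).
Definition Csub (z w : Cx) : Cx := Cadd z (Copp w).
Definition Cmul (z w : Cx) : Cx :=
  (Re z * Re w - Im z * Im w, Re z * Im w + Im z * Re w).
(* multiplicative inverse (z <> 0 intended) *)
Definition Cinv (z : Cx) : Cx :=
  (Re z / (Re z ^ 2 + Im z ^ 2), - Im z / (Re z ^ 2 + Im z ^ 2)).
Definition Cdiv (z w : Cx) : Cx := Cmul z (Cinv w).
Definition Cpow3 (z : Cx) : Cx := Cmul z (Cmul z z).
Definition Cmod (z : Cx) : R := sqrt (Re z ^ 2 + Im z ^ 2).

Definition fstar (a b theta : R) (z : Cx) : Cx :=
  let c := RtoC (2 * cos theta) in
  Csub (Cadd (Cmul (Cadd z c) (Cadd (Cmul c z) (RtoC 1))) (Cmul (RtoC b) z))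
       (Cmul (RtoC a) (Cpow3 (Cadd z c))).

(* Main.v *)
Require Import Defs.
From Stdlib Require Import Reals Lra Psatz.
Open Scope R_scope.
Theorem mainTheorem20 (a b theta : R) (w : Cx) :
  cos theta <> 0 ->
  Im w <> 0 ->
  fstar a b theta w = RtoC 0 ->
  Cmod w < 1 ->
  let zeta := Cinv w in
  let tau := Csub (Copp (Cdiv (RtoC 1) zeta)) (RtoC (2 * cos theta)) in
  Im (Cmul zeta (Cpow3 tau)) <> 0.
Proof.
  revert w. intros [x y] Hc Hy Hf Hm zeta tau.
  subst zeta tau.
  unfold Im in Hy; cbn [snd] in Hy.
  assert (Hr : 0 < x^2 + y^2) by nra.
  assert (Hw : Cdiv (RtoC 1) (Cinv (x,y)) = (x,y)).
  { unfold Cdiv, Cinv, Cmul, RtoC, Re, Im; cbn [fst snd].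
    assert (Hq : (x / (x ^ 2 + y ^ 2)) ^ 2 + (- y / (x ^ 2 + y ^ 2)) ^ 2 <> 0).
    { replace ((x / (x ^ 2 + y ^ 2)) ^ 2 + (- y / (x ^ 2 + y ^ 2)) ^ 2)
        with (1 / (x^2+y^2)) by (field; lra).
      apply Rgt_not_eq, Rdiv_lt_0_compat; lra. }
    f_equal; field; repeat split; lra. }
  rewrite Hw.
  unfold fstar, Cmod, Cpow3, Csub, Cadd, Copp, Cmul, Cdiv, Cinv, RtoC, Re, Im in *; cbn [fst snd] in *.
  set (c := 2 * cos theta) in *.
  assert (Hc' : c <> 0) by (unfold c; lra).
  assert (Hr1 : x^2 + y^2 < 1).
  { destruct (Rlt_le_dec (x^2+y^2) 1) as [h|h]; [exact h|].
    apply sqrt_le_1_alt in h. rewrite sqrt_1 in h. lra. }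
  injection Hf as E1 E2.
  set (p := x + c) in *.
  set (U1 := p*(p*p - y*y) - y*(p*y + y*p)).
  set (U2 := p*(p*y+y*p) + y*(p*p - y*y)).
  assert (Key : a * (U2 * x - U1 * y) = c * y * (x^2+y^2-1)).
  { assert (A1 : a * U1 = (x + c) * (c * x + 1) - y * (c * y) + b * x)
      by (apply Rminus_diag_uniq_sym; rewrite <- E1; unfold U1, p; ring).
    assert (A2 : a * U2 = (x + c) * (c * y) + y * (c * x + 1) + b * y)
      by (apply Rminus_diag_uniq_sym; rewrite <- E2; unfold U2, p; ring).
    replace (a * (U2 * x - U1 * y)) with ((a*U2)*x - (a*U1)*y) by ring.
    rewrite A1, A2. ring. }
  intro H.
  assert (HU : U2 * x - U1 * y = 0).
  { apply (Rmult_eq_reg_r (-/(x^2+y^2))).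
    - rewrite Rmult_0_l, <- H. unfold U1, U2, p. field. lra.
    - apply Ropp_neq_0_compat, Rinv_neq_0_compat. lra. }
  rewrite HU, Rmult_0_r in Key.
  assert (c * y <> 0) by (apply Rmult_integral_contrapositive; tauto).
  assert (c * y * (x^2+y^2-1) <> 0) by (apply Rmult_integral_contrapositive; split; lra).
  lra.
Qed.
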